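(* Let $\mathcal H_A,\mathcal H_B$ be finite-dimensional Hilbert spaces, $U$ a unitary on $\mathcal H_A\otimes\mathcal H_B$, $\beta$ a density operator on $\mathcal H_B$, and let $\mathcal E[X]=\operatorname{Tr}_B[U(X\otimes\beta)U^\dagger]$. Let $\alpha$ be a density operator on $\mathcal H_A$ such that $\mathcal E[\alpha]$ is invertible. Then the Petz recovery map of $\mathcal E$ with reference $\alpha$, $$\hat{\mathcal E}_\alpha[X]=\sqrt{\alpha}\,\mathcal E^\dagger\!\left[\mathcal E[\alpha]^{-1/2}X\,\mathcal E[\alpha]^{-1/2}\right]\sqrt\alpha,$$ satisfies $$\hat{\mathcal E}_\alpha[X]=\operatorname{Tr}_B\!\left[U^\dagger\,\mathcal A_{\Omega}[X]\,U\right],\qquad \Omega:=U(\alpha\otimes\beta)U^\dagger,$$ where for a state $\Omega$ on $\mathcal H_A\otimes\mathcal H_B$ with $\operatorname{Tr}_B\Omega$ invertible, $$\mathcal A_{\Omega}[X]=\sqrt{\Omega}\left[\left((\operatorname{Tr}_B\Omega)^{-1/2}\,X\,(\operatorname{Tr}_B\Omega)^{-1/2}\right)\otimes\mathbb 1_B\right]\sqrt{\Omega}.$$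
   Context: $\mathcal E^\dagger$ denotes the adjoint map with respect to the Hilbert–Schmidt inner product, defined by $\operatorname{Tr}(\mathcal E[X]Y)=\operatorname{Tr}(X\mathcal E^\dagger[Y])$ for all operators $X,Y$. $\operatorname{Tr}_B$ is the partial trace over $\mathcal H_B$. *)

(* Defs.v *)
(* Complex scalars: an arbitrary numClosedFieldType C
   (e.g. algC or complex R); operators on H_A, H_B, H_A (x) H_B are square
   matrices of sizes m, n, m*n; the tensor product is mxtens.tensmx. *)
From HB Require Import structures.
From mathcomp Require Import all_boot all_order all_algebra.
From mathcomp Require Import sesquilinear spectral.
From mathcomp Require mxtens.
Set Implicit Arguments. Unset Strict Implicit. Unset Printing Implicit Defensive.
Import Order.TTheory GRing.Theory Num.Theory Num.Def.
Local Open Scope ring_scope.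

Section QDefs.
Variable C : numClosedFieldType.

Definition dagger m n (A : 'M[C]_(m, n)) : 'M[C]_(n, m) := (map_mx conjC A)^T.

(* Tensor product of operators (Kronecker product, A-index major). *)
Definition otimes m n (A : 'M[C]_m) (B : 'M[C]_n) : 'M[C]_(m * n) :=
  mxtens.tensmx A B.

Definition unitary n (U : 'M[C]_n) : Prop := U *m dagger U = 1%:M.

Definition psd n (A : 'M[C]_n) : Prop :=
  dagger A = A /\ forall v : 'rV[C]_n, 0 <= (v *m A *m dagger v) 0 0.

Definition density n (A : 'M[C]_n) : Prop := psd A /\ \tr A = 1.

(* Principal (positive) square root, via the spectral decomposition
   A = P^-1 diag(d) P with P unitary; for psd A this is the unique psd
   square root. *)
Definition msqrt n (A : 'M[C]_n) : 'M[C]_n :=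
  invmx (spectralmx A) *m diag_mx (map_mx sqrtC (spectral_diag A))
    *m spectralmx A.

Definition minvsqrt n (A : 'M[C]_n) : 'M[C]_n := invmx (msqrt A).

Definition ptraceB m n (M : 'M[C]_(m * n)) : 'M[C]_m :=
  \matrix_(i, j) \sum_(k < n)
     M (mxtens.mxtens_index (i, k)) (mxtens.mxtens_index (j, k)).

(* Adjoint w.r.t. the trace pairing Tr(E[X] Y) = Tr(X E^dagger[Y]):
   the unique such map, written out entrywise
   (E^dagger[Y])_{ij} = Tr(E[e_{ji}] Y). *)
Definition hs_adjoint m n (E : 'M[C]_m -> 'M[C]_n) (Y : 'M[C]_n) : 'M[C]_m :=
  \matrix_(i, j) \tr (E (delta_mx j i) *m Y).

Definition chanE m n (U : 'M[C]_(m * n)) (beta : 'M[C]_n) (X : 'M[C]_m)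
  : 'M[C]_m := ptraceB (U *m otimes X beta *m dagger U).

Definition petz m (E : 'M[C]_m -> 'M[C]_m) (alpha X : 'M[C]_m) : 'M[C]_m :=
  msqrt alpha *m
    hs_adjoint E (minvsqrt (E alpha) *m X *m minvsqrt (E alpha))
  *m msqrt alpha.

Definition mapA m n (Om : 'M[C]_(m * n)) (X : 'M[C]_m) : 'M[C]_(m * n) :=
  msqrt Om *m
    otimes (minvsqrt (ptraceB Om) *m X *m minvsqrt (ptraceB Om)) (1%:M : 'M[C]_n)
  *m msqrt Om.

End QDefs.

(* Main.v *)
Require Import Defs.
From HB Require Import structures.
From mathcomp Require Import all_boot all_order all_algebra.
From mathcomp Require Import sesquilinear spectral.
From mathcomp Require mxtens.
Set Warnings "-notation-overridden,-ambiguous-paths".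
Set Implicit Arguments. Unset Strict Implicit.
Import GRing.Theory Num.Theory Num.Def.
Local Open Scope ring_scope.

Notation tidx := (@mxtens.mxtens_index _ _).

Lemma sum_tens (R : nmodType) m n (F : 'I_(m * n) -> R) :
  \sum_(p < m * n) F p = \sum_(a < m) \sum_(b < n) F (tidx (a, b)).
Proof.
rewrite pair_big /=.
rewrite (reindex (@mxtens.mxtens_index m n)) /=; last first.
  by exists (@mxtens.mxtens_unindex m n) => x _; rewrite (mxtens.mxtens_indexK, mxtens.mxtens_unindexK).
by apply: eq_bigr => -[a b].
Qed.

Lemma mulT1l (C : comPzRingType) m n p (A : 'M[C]_m) (N : 'M[C]_(m * n, p)) i k q :
  ((mxtens.tensmx A (1%:M : 'M_n)) *m N) (tidx (i, k)) q
  = \sum_(a < m) A i a * N (tidx (a, k)) q.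
Proof.
rewrite mxE sum_tens; apply: eq_bigr => a _.
rewrite (bigD1 k) //= big1 ?addr0; last first.
  by move=> b /negPf nb; rewrite mxtens.tensmxE mxE eq_sym nb mulr0 mul0r.
by rewrite mxtens.tensmxE mxE eqxx mulr1.
Qed.

Lemma mul1Tl (C : comPzRingType) m n p (B : 'M[C]_n) (N : 'M[C]_(m * n, p)) i k q :
  ((mxtens.tensmx (1%:M : 'M_m) B) *m N) (tidx (i, k)) q
  = \sum_(b < n) B k b * N (tidx (i, b)) q.
Proof.
rewrite mxE sum_tens (bigD1 i) //= [X in _ + X]big1 ?addr0; last first.
  move=> a /negPf na; apply: big1 => b _.
  by rewrite mxtens.tensmxE mxE eq_sym na mul0r mul0r.
by apply: eq_bigr => b _; rewrite mxtens.tensmxE mxE eqxx mul1r.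
Qed.

Lemma mulT1r (C : comPzRingType) m n p (A : 'M[C]_m) (N : 'M[C]_(p, m * n)) i k q :
  (N *m (mxtens.tensmx A (1%:M : 'M_n))) q (tidx (i, k))
  = \sum_(a < m) N q (tidx (a, k)) * A a i.
Proof.
rewrite mxE sum_tens; apply: eq_bigr => a _.
rewrite (bigD1 k) //= big1 ?addr0; last first.
  by move=> b /negPf nb; rewrite mxtens.tensmxE mxE nb mulr0 mulr0.
by rewrite mxtens.tensmxE mxE eqxx mulr1.
Qed.

Lemma mul1Tr (C : comPzRingType) m n p (B : 'M[C]_n) (N : 'M[C]_(p, m * n)) i k q :
  (N *m (mxtens.tensmx (1%:M : 'M_m) B)) q (tidx (i, k))
  = \sum_(b < n) N q (tidx (i, b)) * B b k.
Proof.
rewrite mxE sum_tens (bigD1 i) //= [X in _ + X]big1 ?addr0; last first.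
  move=> a /negPf na; apply: big1 => b _.
  by rewrite mxtens.tensmxE mxE na mul0r mulr0.
by apply: eq_bigr => b _; rewrite mxtens.tensmxE mxE eqxx mul1r.
Qed.

Lemma ptrA (C : numClosedFieldType) m n (A A' : 'M[C]_m) (N : 'M[C]_(m * n)) :
  ptraceB (mxtens.tensmx A (1%:M : 'M_n) *m N *m mxtens.tensmx A' (1%:M : 'M_n))
  = A *m ptraceB N *m A'.
Proof.
apply/matrixP => i j; rewrite !mxE.
under eq_bigr do rewrite mulT1r; under eq_bigr do under eq_bigr do rewrite mulT1l.
under [RHS]eq_bigr do rewrite mxE.
under [RHS]eq_bigr do under eq_bigr do rewrite mxE.
rewrite exchange_big; apply: eq_bigr => a' _.
rewrite mulr_suml; under [RHS]eq_bigr do rewrite mulr_sumr mulr_suml.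
rewrite [RHS]exchange_big; apply: eq_bigr => k _.
rewrite mulr_suml; apply: eq_bigr => a _. by [].
Qed.

Lemma ptrB (C : numClosedFieldType) m n (B : 'M[C]_n) (N : 'M[C]_(m * n)) :
  ptraceB (mxtens.tensmx (1%:M : 'M_m) B *m N)
  = ptraceB (N *m mxtens.tensmx (1%:M : 'M_m) B).
Proof.
apply/matrixP => i j; rewrite !mxE.
under eq_bigr do rewrite mul1Tl; under [RHS]eq_bigr do rewrite mul1Tr.
rewrite [RHS]exchange_big; apply: eq_bigr => k _; apply: eq_bigr => b _.
by rewrite mulrC.
Qed.

Lemma tr_ptr (C : numClosedFieldType) m n (W : 'M[C]_m) (N : 'M[C]_(m * n)) :
  \tr (ptraceB N *m W) = \tr (N *m mxtens.tensmx W (1%:M : 'M_n)).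
Proof.
rewrite /mxtrace sum_tens; apply: eq_bigr => i _.
under [RHS]eq_bigr do rewrite mulT1r.
rewrite mxE exchange_big; apply: eq_bigr => a _.
by rewrite mxE mulr_suml.
Qed.

Lemma tr_delta (C : numClosedFieldType) m n (i j : 'I_m) (Y : 'M[C]_(m * n)) :
  \tr (mxtens.tensmx (delta_mx j i) (1%:M : 'M_n) *m Y) = ptraceB Y i j.
Proof.
rewrite /mxtrace sum_tens mxE (bigD1 j) //= [X in _ + X]big1 ?addr0; last first.
  move=> a /negPf na; apply: big1 => b _; rewrite mulT1l.
  by apply: big1 => c _; rewrite mxE na mul0r.
apply: eq_bigr => b _; rewrite mulT1l (bigD1 i) //= [X in _ + X]big1 ?addr0.
  by rewrite mxE !eqxx mul1r.
by move=> c /negPf nc; rewrite mxE nc andbF mul0r.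
Qed.

Lemma tidx_eq m n (a c : 'I_m) (b d : 'I_n) :
  (tidx (a, b) == tidx (c, d)) = (a == c) && (b == d).
Proof. by rewrite (can_eq (@mxtens.mxtens_indexK m n)) xpair_eqE. Qed.

Lemma tens11 (C : numClosedFieldType) m n :
  mxtens.tensmx (1%:M : 'M[C]_m) (1%:M : 'M[C]_n) = 1%:M.
Proof.
apply/matrixP => i j.
case: (mxtens.mxtens_indexP i) => a b; case: (mxtens.mxtens_indexP j) => c d.
rewrite mxtens.tensmxE !mxE tidx_eq.
by case: (a == c); case: (b == d); rewrite ?mulr1 ?mulr0 ?mul0r.
Qed.

Definition trow (C : numClosedFieldType) m n (d : 'rV[C]_m) (e : 'rV[C]_n) : 'rV[C]_(m * n) :=
  \row_k (d 0 (mxtens.mxtens_unindex k).1 * e 0 (mxtens.mxtens_unindex k).2).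

Lemma tens_diag (C : numClosedFieldType) m n (d : 'rV[C]_m) (e : 'rV[C]_n) :
  mxtens.tensmx (diag_mx d) (diag_mx e) = diag_mx (trow d e).
Proof.
apply/matrixP => i j.
case: (mxtens.mxtens_indexP i) => a b; case: (mxtens.mxtens_indexP j) => c f.
rewrite mxtens.tensmxE !mxE tidx_eq mxtens.mxtens_indexK /=.
case: (eqVneq a c) => [->|_]; case: (eqVneq b f) => [->|_] //=;
  by rewrite ?mulr1n ?mulr0n ?mulr0 ?mul0r.
Qed.

Lemma dagger_mul (C : numClosedFieldType) m n p (A : 'M[C]_(m, n)) (B : 'M[C]_(n, p)) :
  dagger (A *m B) = dagger B *m dagger A.
Proof. by rewrite /dagger map_mxM trmx_mul. Qed.

Lemma dagger_tens (C : numClosedFieldType) m n (A : 'M[C]_m) (B : 'M[C]_n) :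
  dagger (mxtens.tensmx A B) = mxtens.tensmx (dagger A) (dagger B).
Proof. by apply/matrixP => i j; rewrite !mxE rmorphM. Qed.

Lemma daggerK (C : numClosedFieldType) m n (A : 'M[C]_(m, n)) : dagger (dagger A) = A.
Proof. by apply/matrixP => i j; rewrite !mxE conjCK. Qed.

Lemma dagger_tc (C : numClosedFieldType) m n (A : 'M[C]_(m, n)) :
  dagger A = map_mx conjC (trmx A).
Proof. by apply/matrixP => i j; rewrite !mxE. Qed.

Lemma diag_indep (C : numClosedFieldType) n (P P' Q Q' : 'M[C]_n) (d e : 'rV[C]_n) (f : C -> C) :
  P' *m P = 1%:M -> P *m P' = 1%:M -> Q' *m Q = 1%:M -> Q *m Q' = 1%:M ->
  P' *m diag_mx d *m P = Q' *m diag_mx e *m Q ->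
  P' *m diag_mx (map_mx f d) *m P = Q' *m diag_mx (map_mx f e) *m Q.
Proof.
move=> PP' P'P QQ' Q'Q H.
have HR : (Q *m P') *m diag_mx d = diag_mx e *m (Q *m P').
  have := congr1 (fun X => Q *m X *m P') H.
  by rewrite !mulmxA Q'Q mul1mx -!mulmxA P'P mulmx1 => ->.
have HRf : (Q *m P') *m diag_mx (map_mx f d) = diag_mx (map_mx f e) *m (Q *m P').
  move: (Q *m P') HR => R HR.
  apply/matrixP => i j; move/matrixP: HR => /(_ i j).
  rewrite !mul_mx_diag !mul_diag_mx !mxE.
  case: (eqVneq (R i j) 0) => [->|nz]; first by move=> _; rewrite mul0r mulr0.
  move=> h; have -> : e 0 i = d 0 j by apply: (mulIf nz); rewrite -h mulrC.
  by rewrite mulrC.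
transitivity (Q' *m Q *m P' *m diag_mx (map_mx f d) *m P); first by rewrite QQ' mul1mx.
rewrite -(mulmxA Q') -(mulmxA Q') HRf !mulmxA.
by rewrite -mulmxA PP' mulmx1.
Qed.

Lemma herm_normal (C : numClosedFieldType) n (A : 'M[C]_n) : dagger A = A -> A \is normalmx.
Proof. by move=> hA; apply/normalmxP; rewrite -dagger_tc hA. Qed.

Lemma msqrt_diag (C : numClosedFieldType) n (A P P' : 'M[C]_n) (d : 'rV[C]_n) :
  dagger A = A -> P' *m P = 1%:M -> P *m P' = 1%:M -> A = P' *m diag_mx d *m P ->
  msqrt A = P' *m diag_mx (map_mx sqrtC d) *m P.
Proof.
move=> hA h1 h2 hd.
have /orthomx_spectralP hS := herm_normal hA.
rewrite /msqrt; apply: diag_indep => //.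
- exact: mulVmx (spectral_unit A).
- exact: mulmxV (spectral_unit A).
- by rewrite -hS -hd.
Qed.

Lemma eig_nonneg (C : numClosedFieldType) n (A : 'M[C]_n) i :
  psd A -> 0 <= spectral_diag A 0 i.
Proof.
case=> hA pos.
have /orthomx_spectralP hS := herm_normal hA.
have := pos (delta_mx 0 i *m spectralmx A).
have hdS : dagger (spectralmx A) = invmx (spectralmx A).
  by rewrite dagger_tc invmx_unitary ?spectral_unitarymx.
have hde : dagger (delta_mx 0 i : 'rV[C]_n) = delta_mx i 0.
  by apply/matrixP => a b; rewrite !mxE rmorph_nat andbC.
rewrite dagger_mul hdS hde {2}hS.
rewrite !mulmxA -(mulmxA _ (spectralmx A)) mulmxV ?spectral_unit // mulmx1.
rewrite -(mulmxA _ (spectralmx A)) mulmxV ?spectral_unit // mulmx1.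
rewrite mul_mx_diag mxE (bigD1 i) //= big1 ?addr0.
  by rewrite !mxE !eqxx mulr1 mul1r.
by move=> k /negPf nk; rewrite !mxE nk andbF mulr0.
Qed.

Lemma msqrt_Omega (C : numClosedFieldType) m n (U : 'M[C]_(m * n)) (al : 'M[C]_m) (be : 'M[C]_n) :
  U *m dagger U = 1%:M -> psd al -> psd be ->
  msqrt (U *m otimes al be *m dagger U) = U *m otimes (msqrt al) (msqrt be) *m dagger U.
Proof.
move=> hU pa pb; have hU' : dagger U *m U = 1%:M := mulmx1C hU.
have /orthomx_spectralP ha := herm_normal pa.1.
have /orthomx_spectralP hb := herm_normal pb.1.
have ua := spectral_unit al; have ub := spectral_unit be.
rewrite /otimes (@msqrt_diag _ _ _ (mxtens.tensmx (spectralmx al) (spectralmx be) *m dagger U)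
   (U *m mxtens.tensmx (invmx (spectralmx al)) (invmx (spectralmx be)))
   (trow (spectral_diag al) (spectral_diag be))).
- have -> : map_mx sqrtC (trow (spectral_diag al) (spectral_diag be))
      = trow (map_mx sqrtC (spectral_diag al)) (map_mx sqrtC (spectral_diag be)).
    apply/matrixP => i j; rewrite !mxE sqrtCM //; rewrite nnegrE; exact: eig_nonneg.
  rewrite -tens_diag !mulmxA; congr (_ *m _); rewrite -!mulmxA; congr (_ *m _).
  by rewrite !mxtens.tensmx_mul !mulmxA.
- by rewrite !dagger_mul daggerK dagger_tens pa.1 pb.1 mulmxA.
- by rewrite mulmxA -(mulmxA U) mxtens.tensmx_mul !mulVmx // tens11 mulmx1 hU.
- by rewrite mulmxA -(mulmxA _ (dagger U)) hU' mulmx1 mxtens.tensmx_mul !mulmxV // tens11.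
- rewrite -tens_diag !mulmxA; congr (_ *m _); rewrite -!mulmxA; congr (_ *m _).
  by rewrite !mxtens.tensmx_mul !mulmxA -ha -hb.
Qed.

Lemma msqrt_sq (C : numClosedFieldType) n (A : 'M[C]_n) : psd A -> msqrt A *m msqrt A = A.
Proof.
case=> hA _; have /orthomx_spectralP hS := herm_normal hA.
have uS := spectral_unit A.
rewrite [RHS]hS /msqrt !mulmxA -(mulmxA _ (spectralmx A) (invmx (spectralmx A))) mulmxV // mulmx1.
rewrite -[in LHS](mulmxA (invmx _)) mulmx_diag; congr (_ *m diag_mx _ *m _).
by apply/rowP => j; rewrite !mxE -expr2 sqrtCK.
Qed.

Lemma hs_chan (C : numClosedFieldType) m n (U : 'M[C]_(m * n)) (be : 'M[C]_n) (W : 'M[C]_m) :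
  hs_adjoint (chanE U be) W
  = ptraceB (mxtens.tensmx (1%:M : 'M_m) be *m (dagger U *m mxtens.tensmx W (1%:M : 'M_n) *m U)).
Proof.
apply/matrixP => i j; rewrite mxE /chanE tr_ptr.
rewrite -!mulmxA mxtrace_mulC /otimes (mxtens.tensmx_decr (delta_mx j i) be) -!mulmxA.
by rewrite tr_delta !mulmxA.
Qed.

Unset Implicit Arguments.
Unset Strict Implicit.

Theorem mainTheorem2 (C : numClosedFieldType) (m n : nat)
  (U : 'M[C]_(m * n)) (beta : 'M[C]_n) (alpha : 'M[C]_m) :
  unitary U -> density beta -> density alpha ->
  chanE U beta alpha \in unitmx ->
  forall X : 'M[C]_m,
    petz (chanE U beta) alpha X =
    ptraceB (dagger U *m mapA (U *m otimes alpha beta *m dagger U) X *m U).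
Proof.
move=> hU [pb _] [pa _] _ X.
have hU' : dagger U *m U = 1%:M := mulmx1C hU.
rewrite /mapA /petz msqrt_Omega //.
have -> : chanE U beta alpha = ptraceB (U *m otimes alpha beta *m dagger U) by [].
set W := minvsqrt _ *m X *m minvsqrt _.
rewrite hs_chan.
set M := dagger U *m mxtens.tensmx W 1%:M *m U.
set T := otimes (msqrt alpha) (msqrt beta).
have -> : dagger U *m (U *m T *m dagger U *m otimes W 1%:M *m (U *m T *m dagger U)) *m U
    = T *m M *m T.
  by rewrite /M /otimes !mulmxA hU' mul1mx -(mulmxA _ (dagger U) U) hU' mulmx1.
have hT1 : T = mxtens.tensmx (msqrt alpha) (1%:M : 'M_n) *m mxtens.tensmx (1%:M : 'M_m) (msqrt beta).
  exact: mxtens.tensmx_decr.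
have hT2 : T = mxtens.tensmx (1%:M : 'M_m) (msqrt beta) *m mxtens.tensmx (msqrt alpha) (1%:M : 'M_n).
  exact: mxtens.tensmx_decl.
rewrite {1}hT1 hT2.
set A1 := mxtens.tensmx (msqrt alpha) _; set B1 := mxtens.tensmx _ (msqrt beta).
have -> : A1 *m B1 *m M *m (B1 *m A1) = A1 *m (B1 *m M *m B1) *m A1 by rewrite !mulmxA.
rewrite ptrA -(ptrB (msqrt beta) (B1 *m M)) mulmxA /B1 mxtens.tensmx_mul mul1mx msqrt_sq //.
Qed.
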